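(* Let $\mathsf{Syn}(\delta)$ be the free PROP on a single generator $\delta:1\to2$ (graph model in the context) and $\mathbf{FinCorel}$ the PROP of finite corelations. The assignment sending a morphism $f:m\to n$ of $\mathsf{Syn}(\delta)$ to its ancestry partition $\widetilde{\pi}(f)$ extends to a strict symmetric monoidal functor $\Pi:\mathsf{Syn}(\delta)\to\mathbf{FinCorel}$ which is the identity on objects.
   Context: A PROP is a strict symmetric monoidal category whose monoid of objects is $(\mathbb{N},+,0)$. Write $\underline{m}=\{1,\dots,m\}$. $\mathsf{Syn}(\delta)$: objects are natural numbers; a morphism $f:m\to n$ is an isomorphism class of finite directed acyclic graphs $G(f)$ with $m$ linearly ordered input half-edges, $n$ linearly ordered output half-edges, and a finite set of internal vertices, each with exactly one incoming half-edge and a linearly ordered pair of outgoing half-edges; isomorphisms preserve the boundary orders and vertex incidence. Composition glues outputs to inputs in order; tensor ($+$) is disjoint union with concatenated boundary orders; symmetries are wire crossings (not vertices, and they connect nothing beyond the wires they permute). $\mathbf{FinCorel}$: objects $\mathbb{N}$; morphisms $m\to n$ are equivalence relations on $\underline{m}\sqcup\underline{n}$; composite of $R:m\to n$, $S:n\to p$ is the restriction to $\underline{m}\sqcup\underline{p}$ of the equivalence relation generated by $R\cup S$ on $\underline{m}\sqcup\underline{n}\sqcup\underline{p}$; tensor is disjoint union with reindexing; symmetries are transposition corelations. Ancestry partition: for $f:m\to n$, let $|G(f)|$ be the underlying undirected graph of $G(f)$ with inputs attached as pendant vertices labelled by $\underline{m}$ and outputs as pendant vertices labelled by $\underline{n}$;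 $\widetilde\pi(f)$ is the equivalence relation on $\underline{m}\sqcup\underline{n}$ with $x\sim y$ iff pendants $x$ and $y$ lie in the same connected component of $|G(f)|$. *)

(* Defs.v *)
From mathcomp Require Import all_boot.
Set Warnings "-notation-overridden".
Set Implicit Arguments. Unset Strict Implicit. Unset Printing Implicit Defensive.

(* A (raw) graph m -> n: nv internal vertices, each with one incoming
   half-edge and an ordered pair (false = first, true = second) of outgoing
   half-edges.  Sources of wires: inputs 'I_m and outgoing ports of vertices;
   targets of wires: outputs 'I_n and incoming ports of vertices.  [wire]
   says where each source half-edge is glued. *)
Record graph (m n : nat) := Graph {
  nv : nat;
  wire : ('I_m + ('I_nv * bool))%type -> ('I_n + 'I_nv)%type }.
Arguments nv {m n} g.
Arguments wire {m n} g _.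

Definition vedge m n (f : graph m n) : rel 'I_(nv f) :=
  fun v u => [exists b : bool, wire f (inr (v, b)) == inr u].
Arguments vedge {m n} f _ _.

Definition valid m n (f : graph m n) : Prop :=
  bijective (wire f) /\
  (forall v u, vedge f v u -> ~~ connect (vedge f) u v).

Definition mapS m k k' (phi : 'I_k -> 'I_k')
  (s : ('I_m + ('I_k * bool))%type) : ('I_m + ('I_k' * bool))%type :=
  match s with inl i => inl i | inr (v, b) => inr (phi v, b) end.
Definition mapT n k k' (phi : 'I_k -> 'I_k')
  (t : ('I_n + 'I_k)%type) : ('I_n + 'I_k')%type :=
  match t with inl j => inl j | inr v => inr (phi v) end.

Definition giso m n (f g : graph m n) : Prop :=
  exists phi : 'I_(nv f) -> 'I_(nv g), bijective phi /\
    forall s, wire g (mapS phi s) = mapT phi (wire f s).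

Definition gfun m n (h : 'I_m -> 'I_n) : graph m n :=
  @Graph m n 0 (fun s => match s with
                         | inl i => inl (h i)
                         | inr (v, _) => inr v end).

Definition gid m : graph m m := gfun (fun i : 'I_m => i).

Definition swap_ord m n (i : 'I_(m + n)) : 'I_(n + m) :=
  match split i with inl a => rshift n a | inr b => lshift m b end.

Definition gsym m n : graph (m + n) (n + m) := gfun (@swap_ord m n).

Definition gcomp m n p (f : graph m n) (g : graph n p) : graph m p :=
  let k1 := nv f in let k2 := nv g in
  let liftG (t : ('I_p + 'I_k2)%type) : ('I_p + 'I_(k1 + k2))%type :=
      match t with inl q => inl q | inr u => inr (rshift k1 u) end in
  let fromF (t : ('I_n + 'I_k1)%type) : ('I_p + 'I_(k1 + k2))%type :=
      match t with inl j => liftG (wire g (inl j))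
                 | inr v => inr (lshift k2 v) end in
  @Graph m p (k1 + k2) (fun s => match s with
    | inl i => fromF (wire f (inl i))
    | inr (v, b) => match split v with
                    | inl v1 => fromF (wire f (inr (v1, b)))
                    | inr v2 => liftG (wire g (inr (v2, b))) end end).

Definition gtens m n m' n' (f : graph m n) (g : graph m' n') :
    graph (m + m') (n + n') :=
  let k1 := nv f in let k2 := nv g in
  let Lf (t : ('I_n + 'I_k1)%type) : ('I_(n + n') + 'I_(k1 + k2))%type :=
      match t with inl j => inl (lshift n' j) | inr v => inr (lshift k2 v) end in
  let Lg (t : ('I_n' + 'I_k2)%type) : ('I_(n + n') + 'I_(k1 + k2))%type :=
      match t with inl j => inl (rshift n j) | inr v => inr (rshift k1 v) end in
  @Graph (m + m') (n + n') (k1 + k2) (fun s => match s with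
    | inl i => match split i with
               | inl i1 => Lf (wire f (inl i1))
               | inr i2 => Lg (wire g (inl i2)) end
    | inr (v, b) => match split v with
               | inl v1 => Lf (wire f (inr (v1, b)))
               | inr v2 => Lg (wire g (inr (v2, b))) end end).

(* A corelation m -> n is an equivalence relation on 'I_m + 'I_n
   (left summand = domain, right summand = codomain). *)
Definition corel (m n : nat) := rel ('I_m + 'I_n)%type.

Definition is_corel m n (R : corel m n) : Prop :=
  [/\ reflexive R, symmetric R & transitive R].

Definition corel_eq m n (R S : corel m n) : Prop := forall x y, R x y = S x y.

Definition cfun m n (h : 'I_m -> 'I_n) : corel m n :=
  let pr (x : ('I_m + 'I_n)%type) : 'I_n :=
      match x with inl i => h i | inr j => j end in
  fun x y => pr x == pr y.

Arguments cfun {m n} h _ _.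
Definition cid m : corel m m := cfun (fun i : 'I_m => i).
Definition csym m n : corel (m + n) (n + m) := cfun (@swap_ord m n).
Arguments cid : clear implicits.
Arguments csym : clear implicits.

(* composite: restriction of the equivalence relation generated by R u S *)
Definition ccomp m n p (R : corel m n) (S : corel n p) : corel m p :=
  let U := (('I_m + 'I_n) + 'I_p)%type in
  let inS (x : ('I_n + 'I_p)%type) : U :=
      match x with inl j => inl (inr j) | inr q => inr q end in
  let e (a b : U) : bool :=
      [exists x, exists y, [&& R x y, a == inl x & b == inl y]] ||
      [exists x, exists y, [&& S x y, a == inS x & b == inS y]] in
  let e' (a b : U) : bool := e a b || e b a in
  let emb (x : ('I_m + 'I_p)%type) : U :=
      match x with inl i => inl (inl i) | inr q => inr q end in
  fun x y => connect e' (emb x) (emb y).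

Definition cside m n m' n' (x : ('I_(m + m') + 'I_(n + n'))%type) :
    (('I_m + 'I_n) + ('I_m' + 'I_n'))%type :=
  match x with
  | inl i => match split i with inl a => inl (inl a) | inr b => inr (inl b) end
  | inr j => match split j with inl a => inl (inr a) | inr b => inr (inr b) end
  end.

Definition ctens m n m' n' (R : corel m n) (S : corel m' n') :
    corel (m + m') (n + n') :=
  fun x y => match cside x, cside y with
             | inl a, inl b => R a b
             | inr a, inr b => S a b
             | _, _ => false end.

(* nodes of |G(f)|: pendant inputs, pendant outputs, internal vertices *)
Definition ancestry m n (f : graph m n) : corel m n :=
  let N := (('I_m + 'I_n) + 'I_(nv f))%type in
  let srcn (s : ('I_m + ('I_(nv f) * bool))%type) : N :=
      match s with inl i => inl (inl i) | inr (v, _) => inr v end in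
  let tgtn (t : ('I_n + 'I_(nv f))%type) : N :=
      match t with inl j => inl (inr j) | inr u => inr u end in
  let adj (a b : N) : bool :=
      [exists s, ((a == srcn s) && (b == tgtn (wire f s))) ||
                 ((b == srcn s) && (a == tgtn (wire f s)))] in
  fun x y => connect adj (inl x) (inl y).

(* Main.v *)
Require Import Defs.
From mathcomp Require Import all_boot.
Set Implicit Arguments. Unset Strict Implicit. Unset Printing Implicit Defensive.

Lemma connect_map (T T' : finType) (e : rel T) (e' : rel T') (h : T -> T') :
  (forall a b, e a b -> connect e' (h a) (h b)) ->
  forall a b, connect e a b -> connect e' (h a) (h b).
Proof.
move=> He a b /connectP [p pth ->]; elim: p a pth => [|c p IH] a /=.
  by rewrite connect0.
by move=> /andP[eac pth]; apply: connect_trans (He _ _ eac) (IH _ pth).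
Qed.

Lemma connect_false (T : finType) (a b : T) :
  connect (fun _ _ => false) a b -> a = b.
Proof. by move=> /connectP [[|c p] //= _ ->]. Qed.

Definition srcN m n (f : graph m n) (s : ('I_m + ('I_(nv f) * bool))%type)
  : (('I_m + 'I_n) + 'I_(nv f))%type :=
  match s with inl i => inl (inl i) | inr (v, _) => inr v end.
Definition tgtN m n (f : graph m n) (t : ('I_n + 'I_(nv f))%type)
  : (('I_m + 'I_n) + 'I_(nv f))%type :=
  match t with inl j => inl (inr j) | inr u => inr u end.
Arguments srcN {m n} f s.
Arguments tgtN {m n} f t.
Definition adjN m n (f : graph m n) : rel (('I_m + 'I_n) + 'I_(nv f))%type :=
  fun a b => [exists s, ((a == srcN f s) && (b == tgtN f (wire f s))) ||
                        ((b == srcN f s) && (a == tgtN f (wire f s)))].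

Arguments adjN {m n} f _ _.

Lemma ancestryE m n (f : graph m n) x y :
  ancestry f x y = connect (adjN f) (inl x) (inl y).
Proof. reflexivity. Qed.

Lemma adjN_sym m n (f : graph m n) : symmetric (adjN f).
Proof. by move=> a b; apply: eq_existsb => s; rewrite orbC. Qed.

Lemma adjN_csym m n (f : graph m n) : connect_sym (adjN f).
Proof. exact/sym_connect_sym/adjN_sym. Qed.

Lemma adjN_edge m n (f : graph m n) s : adjN f (srcN f s) (tgtN f (wire f s)).
Proof. by apply/existsP; exists s; rewrite !eqxx. Qed.
Arguments adjN_edge {m n} f s.

Lemma adjN_hom m n (f : graph m n) (T' : finType) (e' : rel T') h :
  connect_sym e' ->
  (forall s, connect e' (h (srcN f s)) (h (tgtN f (wire f s)))) ->
  forall a b, adjN f a b -> connect e' (h a) (h b).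
Proof.
move=> sy H a b /existsP [s /orP [/andP[/eqP-> /eqP->]|/andP[/eqP-> /eqP->]]].
  exact: H.
by rewrite sy; exact: H.
Qed.

Lemma adjN_conn m n (f : graph m n) (T' : finType) (e' : rel T') h :
  connect_sym e' ->
  (forall s, connect e' (h (srcN f s)) (h (tgtN f (wire f s)))) ->
  forall a b, connect (adjN f) a b -> connect e' (h a) (h b).
Proof. by move=> sy H; apply: connect_map; apply: adjN_hom. Qed.

Lemma is_corel_anc m n (f : graph m n) : is_corel (ancestry f).
Proof.
split => [x|x y|x y z]; rewrite ?ancestryE.
- exact: connect0.
- exact: adjN_csym.
- exact: connect_trans.
Qed.

Lemma anc_gfun m n (h : 'I_m -> 'I_n) : corel_eq (ancestry (gfun h)) (cfun h).
Proof.
pose pr (x : ('I_m + 'I_n)%type) : 'I_n :=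
      match x with inl i => h i | inr j => j end.
have -> : cfun h = fun x y => pr x == pr y by [].
move=> x y; rewrite ancestryE; apply/idP/idP.
- pose q (a : (('I_m + 'I_n) + 'I_(nv (gfun h)))%type) : option 'I_n :=
    match a with inl x => Some (pr x) | inr _ => None end.
  move=> /(adjN_conn (e' := fun _ _ => false) (h := q)) H.
  have /connect_false [] // : connect (fun _ _ => false) (q (inl x)) (q (inl y)).
  + apply: H.
    * by apply: sym_connect_sym.
    * by case=> [i|[v b]]; [exact: connect0| case: v].
  by move=> ->.
- have Hc z : connect (adjN (gfun h)) (inl z) (inl (inr (pr z))).
    case: z => [i|j] /=; last exact: connect0.
    by apply: connect1; exact (@adjN_edge _ _ (gfun h) (inl i)).
  move=> /eqP E; apply: connect_trans (Hc x) _.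
  by rewrite E adjN_csym; exact: Hc.
Qed.

Lemma anc_iso_dir m n (f g : graph m n) (phi : 'I_(nv f) -> 'I_(nv g)) :
  (forall s, wire g (mapS phi s) = mapT phi (wire f s)) ->
  forall x y, ancestry f x y -> ancestry g x y.
Proof.
move=> H x y; rewrite !ancestryE.
pose hN (a : (('I_m + 'I_n) + 'I_(nv f))%type) : (('I_m + 'I_n) + 'I_(nv g))%type :=
  match a with inl x => inl x | inr v => inr (phi v) end.
move=> /(adjN_conn (e' := adjN g) (h := hN)); apply; first exact: adjN_csym.
move=> s.
have -> : hN (srcN f s) = srcN g (mapS phi s) by case: s => [|[]].
have -> : hN (tgtN f (wire f s)) = tgtN g (mapT phi (wire f s)) by case: (wire f s).
by rewrite -H; apply: connect1; exact: adjN_edge.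
Qed.

Lemma anc_iso m n (f g : graph m n) : giso f g ->
  corel_eq (ancestry f) (ancestry g).
Proof.
move=> [phi [[psi c1 c2] H]] x y; apply/idP/idP; first exact: (anc_iso_dir H).
apply: (@anc_iso_dir _ _ g f psi) => s.
have := H (mapS psi s).
have -> : mapS phi (mapS psi s) = s by case: s => [|[v b]] //=; rewrite c2.
move=> ->; case: (wire f _) => //= v; by rewrite c1.
Qed.

Lemma split_l n m (j : 'I_n) : split (lshift m j) = inl j.
Proof. exact: (unsplitK (inl j)). Qed.
Lemma split_r n m (j : 'I_m) : split (rshift n j) = inr j.
Proof. exact: (unsplitK (inr j)). Qed.

Module TensM.
Section Tens.
Variables (m n m' n' : nat) (f : graph m n) (g : graph m' n').
Let C := gtens f g.
Definition Lf (t : ('I_n + 'I_(nv f))%type) : ('I_(n + n') + 'I_(nv f + nv g))%type :=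
  match t with inl j => inl (lshift n' j) | inr v => inr (lshift (nv g) v) end.
Definition Lg (t : ('I_n' + 'I_(nv g))%type) : ('I_(n + n') + 'I_(nv f + nv g))%type :=
  match t with inl j => inl (rshift n j) | inr v => inr (rshift (nv f) v) end.

Lemma wireT_il i i1 : split i = inl i1 -> wire C (inl i) = Lf (wire f (inl i1)).
Proof. by move=> E; rewrite /C /gtens /= E. Qed.
Lemma wireT_ir i i1 : split i = inr i1 -> wire C (inl i) = Lg (wire g (inl i1)).
Proof. by move=> E; rewrite /C /gtens /= E. Qed.
Lemma wireT_vl v b v1 : split v = inl v1 -> wire C (inr (v, b)) = Lf (wire f (inr (v1, b))).
Proof. by move=> E; rewrite /C /gtens /= E. Qed.
Lemma wireT_vr v b v1 : split v = inr v1 -> wire C (inr (v, b)) = Lg (wire g (inr (v1, b))).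
Proof. by move=> E; rewrite /C /gtens /= E. Qed.

Definition NF := (('I_m + 'I_n) + 'I_(nv f))%type.
Definition NG := (('I_m' + 'I_n') + 'I_(nv g))%type.
Definition NC := (('I_(m + m') + 'I_(n + n')) + 'I_(nv C))%type.

Definition hT (a : NC) : (NF + NG)%type :=
  match a with
  | inl x => match cside x with inl a => inl (inl a) | inr a => inr (inl a) end
  | inr v => match split v with inl v1 => inl (inr v1) | inr v2 => inr (inr v2) end
  end.

Definition Esum : rel (NF + NG)%type := fun a b =>
  match a, b with inl a, inl b => adjN f a b | inr a, inr b => adjN g a b
  | _, _ => false end.

Lemma Esum_sym : connect_sym Esum.
Proof.
apply: sym_connect_sym => [[a|a] [b|b]] //=; exact: adjN_sym.
Qed.

Lemma hT_Lf t : hT (tgtN C (Lf t)) = inl (tgtN f t).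
Proof. by case: t => [j|v] //=; rewrite ?split_l. Qed.
Lemma hT_Lg t : hT (tgtN C (Lg t)) = inr (tgtN g t).
Proof. by case: t => [j|v] //=; rewrite ?split_r. Qed.

Lemma Esum_side z w : connect Esum z w ->
  (if z is inl _ then true else false) = (if w is inl _ then true else false).
Proof.
move/(connect_map (e' := fun _ _ => false)
   (h := fun z : (NF + NG)%type => if z is inl _ then true else false)).
move=> H; apply: connect_false; apply: H => - [u|u] [w'|w'] //= _; exact: connect0.
Qed.

Lemma tens_to x y : ancestry C x y -> ctens (ancestry f) (ancestry g) x y.
Proof.
rewrite ancestryE => /(adjN_conn (e' := Esum) (h := hT)) H.
have {}H : connect Esum (hT (inl x)) (hT (inl y)).
  apply: H; first exact: Esum_sym.
  case=> [i|[v b]].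
  - case E: (split i) => [i1|i1].
    + rewrite (wireT_il E) hT_Lf.
      by apply: connect1; rewrite /= /cside E; exact: adjN_edge.
    + rewrite (wireT_ir E) hT_Lg.
      by apply: connect1; rewrite /= /cside E; exact: adjN_edge.
  - case E: (split v) => [v1|v1].
    + rewrite (wireT_vl _ E) hT_Lf.
      by apply: connect1; rewrite /= E; exact: (@adjN_edge _ _ f (inr (v1, b))).
    + rewrite (wireT_vr _ E) hT_Lg.
      by apply: connect1; rewrite /= E; exact: (@adjN_edge _ _ g (inr (v1, b))).
rewrite /ctens /=; move: H; rewrite /hT.
case: (cside x) => a; case: (cside y) => b.
- pose pr (z : (NF + NG)%type) := match z with inl a => a | inr _ => inl a end.
  move/(connect_map (e' := adjN f) (h := pr)); rewrite ancestryE; apply.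
  by move=> [u|u] [w|w] //= E; solve [exact: connect1 E | exact: connect0].
- by move/Esum_side.
- by move/Esum_side.
- pose pr (z : (NF + NG)%type) := match z with inr a => a | inl _ => inl a end.
  move/(connect_map (e' := adjN g) (h := pr)); rewrite ancestryE; apply.
  by move=> [u|u] [w|w] //= E; solve [exact: connect1 E | exact: connect0].
Qed.

Lemma cside_l x a : @cside m n m' n' x = inl a ->
  x = match a with inl i => inl (lshift m' i) | inr j => inr (lshift n' j) end.
Proof.
case: x => [i|j] /=.
- case E: (split i) => [i1|i1] // [<-]; by rewrite -(splitK i) E.
- case E: (split j) => [i1|i1] // [<-]; by rewrite -(splitK j) E.
Qed.
Lemma cside_r x a : @cside m n m' n' x = inr a ->
  x = match a with inl i => inl (rshift m i) | inr j => inr (rshift n j) end.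
Proof.
case: x => [i|j] /=.
- case E: (split i) => [i1|i1] // [<-]; by rewrite -(splitK i) E.
- case E: (split j) => [i1|i1] // [<-]; by rewrite -(splitK j) E.
Qed.

Lemma tens_from x y : ctens (ancestry f) (ancestry g) x y -> ancestry C x y.
Proof.
rewrite /ctens ancestryE.
case Ex: (cside x) => [a|a]; case Ey: (cside y) => [b|b] //.
- rewrite (cside_l Ex) (cside_l Ey) ancestryE.
  pose hF (z : NF) : NC := match z with
    | inl z => inl (match z with inl i => inl (lshift m' i) | inr j => inr (lshift n' j) end)
    | inr v => inr (lshift (nv g) v) end.
  move/(adjN_conn (e' := adjN C) (h := hF)); apply; first exact: adjN_csym.
  move=> s.
  pose sC := match s with inl i => inl (lshift m' i) | inr (v, b) => inr (lshift (nv g) v, b) end.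
  have -> : hF (srcN f s) = srcN C sC by case: s @sC => [|[]].
  have <- : tgtN C (wire C sC) = hF (tgtN f (wire f s)).
    rewrite /sC; case: s {sC} => [i|[v bb]].
    + by rewrite (wireT_il (split_l _ _)); case: (wire f _).
    + by rewrite (wireT_vl _ (split_l _ _)); case: (wire f _).
  apply: connect1; exact: adjN_edge.
- rewrite (cside_r Ex) (cside_r Ey) ancestryE.
  pose hG (z : NG) : NC := match z with
    | inl z => inl (match z with inl i => inl (rshift m i) | inr j => inr (rshift n j) end)
    | inr v => inr (rshift (nv f) v) end.
  move/(adjN_conn (e' := adjN C) (h := hG)); apply; first exact: adjN_csym.
  move=> s.
  pose sC := match s with inl i => inl (rshift m i) | inr (v, b) => inr (rshift (nv f) v, b) end.
  have -> : hG (srcN g s) = srcN C sC by case: s @sC => [|[]].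
  have <- : tgtN C (wire C sC) = hG (tgtN g (wire g s)).
    rewrite /sC; case: s {sC} => [i|[v bb]].
    + by rewrite (wireT_ir (split_r _ _)); case: (wire g _).
    + by rewrite (wireT_vr _ (split_r _ _)); case: (wire g _).
  apply: connect1; exact: adjN_edge.
Qed.

Lemma anc_tens : corel_eq (ancestry C) (ctens (ancestry f) (ancestry g)).
Proof. move=> x y; apply/idP/idP; [exact: tens_to | exact: tens_from]. Qed.
End Tens.

End TensM.
Module CompM.

Section Comp.
Variables (m n p : nat) (f : graph m n) (g : graph n p).
Let k1 := nv f.
Let k2 := nv g.
Let C := gcomp f g.

Definition liftG (t : ('I_p + 'I_k2)%type) : ('I_p + 'I_(k1 + k2))%type :=
  match t with inl q => inl q | inr u => inr (rshift k1 u) end.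
Definition fromF (t : ('I_n + 'I_k1)%type) : ('I_p + 'I_(k1 + k2))%type :=
  match t with inl j => liftG (wire g (inl j)) | inr v => inr (lshift k2 v) end.

Lemma wireC_i i : wire C (inl i) = fromF (wire f (inl i)).
Proof. by []. Qed.
Lemma wireC_vl v b v1 : split v = inl v1 -> wire C (inr (v, b)) = fromF (wire f (inr (v1, b))).
Proof. by move=> E; rewrite /C /gcomp /= E. Qed.
Lemma wireC_vr v b v1 : split v = inr v1 -> wire C (inr (v, b)) = liftG (wire g (inr (v1, b))).
Proof. by move=> E; rewrite /C /gcomp /= E. Qed.

Definition NF := (('I_m + 'I_n) + 'I_k1)%type.
Definition NG := (('I_n + 'I_p) + 'I_k2)%type.
Definition NC := (('I_m + 'I_p) + 'I_(nv C))%type.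
Definition W := (NF + NG)%type.

Definition glue (a : NF) (b : NG) : bool :=
  match a, b with inl (inr j), inl (inl j') => j == j' | _, _ => false end.
Definition E : rel W := fun a b =>
  match a, b with inl a, inl b => adjN f a b | inr a, inr b => adjN g a b
  | inl a, inr b => glue a b | inr a, inl b => glue b a end.
Definition bdF (a : NF) := if a is inl _ then true else false.
Definition bdG (a : NG) := if a is inl _ then true else false.
Definition bd (w : W) := match w with inl a => bdF a | inr a => bdG a end.
Definition E' : rel W := fun a b =>
  match a, b with
  | inl a, inl b => [&& bdF a, bdF b & connect (adjN f) a b]
  | inr a, inr b => [&& bdG a, bdG b & connect (adjN g) a b]
  | inl a, inr b => glue a b | inr a, inl b => glue b a end.
Definition ss (c d : W) : bool :=
  match c, d with inl c, inl d => connect (adjN f) c d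
  | inr c, inr d => connect (adjN g) c d | _, _ => false end.

Lemma E_sym : connect_sym E.
Proof. apply: sym_connect_sym => [[a|a] [b|b]] //=; exact: adjN_sym. Qed.

Lemma E_to_E' c b : bd b -> connect E c b ->
  exists2 d, bd d && ss c d & connect E' d b.
Proof.
move=> bb /connectP [q pth eb]; rewrite eb in bb *; clear eb b.
elim: q c pth bb => [|c' q IH] c /=.
  move=> _ bc; exists c; last exact: connect0.
  by rewrite bc; case: c {bc} => c; exact: connect0.
move=> /andP [Ecc' pth] bl; have [d /andP[bdd sd] cd] := IH c' pth bl; clear IH pth bl; move: (last c' q) cd => b cd.
case: c c' d Ecc' sd bdd cd => [c0|c0] [c1|c1] [d0|d0] //= Ecc' sd bdd cd.
- by exists (inl d0); rewrite //= bdd; exact: connect_trans (connect1 Ecc') sd.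
- move: Ecc' sd; case: c0 => [[//|j]|//]; case: c1 => [[j'|//]|//] /= /eqP <- sd.
  exists (inl (inl (inr j))); first by rewrite /= connect0.
  apply: connect_trans cd; apply: (@connect_trans _ _ (inr (inl (inl j)))).
    by apply: connect1 => /=.
  by apply: connect1; rewrite /= bdd sd.
- move: Ecc' sd; case: c1 => [[//|j]|//]; case: c0 => [[j'|//]|//] /= /eqP <- sd.
  exists (inr (inl (inl j))); first by rewrite /= connect0.
  apply: connect_trans cd; apply: (@connect_trans _ _ (inl (inl (inr j)))).
    by apply: connect1 => /=.
  by apply: connect1; rewrite /= bdd sd.
- by exists (inr d0); rewrite //= bdd; exact: connect_trans (connect1 Ecc') sd.
Qed.

Lemma E_to_E'_bd c b : bd c -> bd b -> connect E c b -> connect E' c b.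
Proof.
move=> bc bb /(E_to_E' bb) [d /andP [bdd sd] cd]; apply: connect_trans cd.
apply: connect1; case: c d bc bdd sd => [c0|c0] [d0|d0] //= -> -> ->; done.
Qed.

Definition hC (a : NC) : W :=
  match a with
  | inl (inl i) => inl (inl (inl i))
  | inl (inr q) => inr (inl (inr q))
  | inr v => match split v with inl v1 => inl (inr v1) | inr v2 => inr (inr v2) end
  end.

Lemma hC_lift t : hC (tgtN C (liftG t)) = inr (tgtN g t).
Proof. by case: t => [q|u] //=; rewrite split_r. Qed.

Lemma fromF_edge sf :
  connect E (inl (srcN f sf)) (hC (tgtN C (fromF (wire f sf)))).
Proof.
have ef := adjN_edge f sf.
case wf: (wire f sf) ef => [j|v] ef /=.
- rewrite hC_lift; apply: (@connect_trans _ _ (inl (inl (inr j)))).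
    exact: connect1.
  apply: (@connect_trans _ _ (inr (inl (inl j)))).
    by apply: connect1 => /=.
  apply: connect1 => /=; exact: (@adjN_edge _ _ g (inl j)).
- by rewrite split_l; apply: connect1.
Qed.

Lemma comp_edges s : connect E (hC (srcN C s)) (hC (tgtN C (wire C s))).
Proof.
case: s => [i|[v b]].
  exact: (fromF_edge (inl i)).
case Ev: (split v) => [v1|v2].
- rewrite (wireC_vl _ Ev) /= Ev; exact: (fromF_edge (inr (v1, b))).
- rewrite (wireC_vr _ Ev) hC_lift /= Ev; apply: connect1.
  exact: (@adjN_edge _ _ g (inr (v2, b))).
Qed.

Definition U := (('I_m + 'I_n) + 'I_p)%type.
Definition inS (x : ('I_n + 'I_p)%type) : U :=
  match x with inl j => inl (inr j) | inr q => inr q end.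
Definition emb (x : ('I_m + 'I_p)%type) : U :=
  match x with inl i => inl (inl i) | inr q => inr q end.
Definition ce0 (R : corel m n) (S : corel n p) (a b : U) : bool :=
  [exists x, exists y, [&& R x y, a == inl x & b == inl y]] ||
  [exists x, exists y, [&& S x y, a == inS x & b == inS y]].
Definition ce R S : rel U := fun a b => ce0 R S a b || ce0 R S b a.

Lemma ccompE R S x y : ccomp R S x y = connect (ce R S) (emb x) (emb y).
Proof. reflexivity. Qed.

Lemma ce_sym R S : connect_sym (ce R S).
Proof. by apply: sym_connect_sym => a b; rewrite /ce orbC. Qed.

Definition kU (u0 : U) (w : W) : U :=
  match w with inl (inl x) => inl x | inr (inl x) => inS x | _ => u0 end.

Lemma comp_to x y : ancestry C x y -> ccomp (ancestry f) (ancestry g) x y.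
Proof.
rewrite ancestryE ccompE => /(adjN_conn (e' := E) (h := hC)) H.
have {}H : connect E (hC (inl x)) (hC (inl y)).
  apply: H; [exact: E_sym | exact: comp_edges].
have {}H : connect E' (hC (inl x)) (hC (inl y)).
  apply: E_to_E'_bd H; [by case: x | by case: y].
have -> : emb x = kU (emb x) (hC (inl x)) by case: x {H}.
have -> : emb y = kU (emb x) (hC (inl y)) by case: y {H}.
move: H; apply: connect_map => a b.
case: a => [[a|a]|[a|a]] //; case: b => [[b|b]|[b|b]] //=.
all: first
  [ move=> ab; apply: connect1; apply/orP; left; apply/orP; left;
    by apply/existsP; exists a; apply/existsP; exists b; rewrite ancestryE ab !eqxx
  | move=> ab; apply: connect1; apply/orP; left; apply/orP; right;
    by apply/existsP; exists a; apply/existsP; exists b; rewrite ancestryE ab !eqxx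
  | by case: a => // j; case: b => // j' /eqP ->; exact: connect0
  | by case: b => // j; case: a => // j' /eqP ->; exact: connect0 ].
Qed.

Definition hU (u : U) : NC :=
  match u with
  | inl (inl i) => inl (inl i)
  | inl (inr j) => tgtN C (liftG (wire g (inl j)))
  | inr q => inl (inr q)
  end.

Lemma ce0_edge a b : ce0 (ancestry f) (ancestry g) a b -> connect (adjN C) (hU a) (hU b).
Proof.
case/orP => /existsP [x0 /existsP [y0 /and3P [R0 /eqP -> /eqP ->]]].
- rewrite ancestryE in R0.
  pose hF (z : NF) : NC := match z with inl z => hU (inl z) | inr v1 => inr (lshift k2 v1) end.
  move: R0; apply: (adjN_conn (e' := adjN C) (h := hF)); first exact: adjN_csym.
  move=> sf.
  pose sC : ('I_m + ('I_(nv C) * bool))%type :=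
    match sf with inl i => inl i | inr (v1, b) => inr (lshift k2 v1, b) end.
  have -> : hF (srcN f sf) = srcN C sC by case: sf @sC => [|[]].
  have <- : tgtN C (wire C sC) = hF (tgtN f (wire f sf)).
    rewrite /sC; case: sf {sC} => [i|[v bb]].
    + by rewrite wireC_i; case: (wire f _).
    + by rewrite (wireC_vl _ (split_l _ _)); case: (wire f _).
  apply: connect1; exact: adjN_edge.
- rewrite ancestryE in R0.
  pose hG (z : NG) : NC := match z with inl z => hU (inS z) | inr v2 => inr (rshift k1 v2) end.
  have -> : hU (inS x0) = hG (inl x0) by [].
  have -> : hU (inS y0) = hG (inl y0) by [].
  move: R0; apply: (adjN_conn (e' := adjN C) (h := hG)); first exact: adjN_csym.
  have hGt t : hG (tgtN g t) = tgtN C (liftG t) by case: t.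
  case=> [j|[v bb]]; rewrite hGt.
  + exact: connect0.
  + rewrite -(wireC_vr bb (split_r _ _)); apply: connect1; exact: adjN_edge.
Qed.

Lemma comp_from x y : ccomp (ancestry f) (ancestry g) x y -> ancestry C x y.
Proof.
rewrite ccompE ancestryE.
have -> : inl x = hU (emb x) by case: x.
have -> : inl y = hU (emb y) by case: y.
apply: connect_map => a b /orP [] /ce0_edge //.
by rewrite adjN_csym.
Qed.

Lemma anc_comp : corel_eq (ancestry C) (ccomp (ancestry f) (ancestry g)).
Proof. move=> x y; apply/idP/idP; [exact: comp_to | exact: comp_from]. Qed.

End Comp.

End CompM.
Theorem theorem2p7 :
  (* Pi f is a morphism of FinCorel, and is well defined on iso classes *)
  (forall m n (f : graph m n), valid f -> is_corel (ancestry f)) /\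
  (forall m n (f g : graph m n), valid f -> valid g -> giso f g ->
     corel_eq (ancestry f) (ancestry g)) /\
  (* identities *)
  (forall m, corel_eq (ancestry (gid m)) (cid m)) /\
  (* composition *)
  (forall m n p (f : graph m n) (g : graph n p), valid f -> valid g ->
     corel_eq (ancestry (gcomp f g)) (ccomp (ancestry f) (ancestry g))) /\
  (* tensor *)
  (forall m n m' n' (f : graph m n) (g : graph m' n'), valid f -> valid g ->
     corel_eq (ancestry (gtens f g)) (ctens (ancestry f) (ancestry g))) /\
  (* symmetries *)
  (forall m n, corel_eq (ancestry (gsym m n)) (csym m n)).
Proof.
split; first by move=> m n f _; exact: is_corel_anc.
split; first by move=> m n f g _ _; exact: anc_iso.
split; first by move=> m; exact: anc_gfun.
split; first by move=> m n p f g _ _; exact: CompM.anc_comp.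
split; first by move=> m n m' n' f g _ _; exact: TensM.anc_tens.
by move=> m n; exact: anc_gfun.
Qed.
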